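(* Let $(\eta_k)_{k\in\mathbb{N}}$ be independent random variables with values in $\mathbb{N}$, $P(\eta_k=i)=p_{ik}$ with $p_{ik}\ge0$ and $\sum_{i=1}^\infty p_{ik}=1$ for all $k$. Suppose there exists $i_0\in\mathbb{N}$ with $$\sum_{k=1}^\infty p_{i_0k}=+\infty.$$ Then the random variable $$\eta=\sum_{k=1}^\infty\frac{(-1)^{k-1}}{\eta_1(\eta_1+\eta_2)\cdots(\eta_1+\eta_2+\dots+\eta_k)}$$ has a distribution that is singular with respect to Lebesgue measure. *)

(* Defs.v *)
From HB Require Import structures.
From mathcomp Require Import all_boot all_order all_algebra.
From mathcomp Require Import finmap.
From mathcomp Require Import all_classical all_reals all_analysis.
Set Implicit Arguments. Unset Strict Implicit. Unset Printing Implicit Defensive.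
Import Order.TTheory GRing.Theory Num.Theory numFieldNormedType.Exports.
Local Open Scope classical_set_scope.
Local Open Scope ring_scope.

(* Mutual independence of a sequence of N-valued random variables:
   product rule over every finite subfamily of indices and every choice of
   (measurable -- all subsets of nat are) sets of values. *)
Definition mutually_independent_nat d (T : measurableType d) (R : realType)
  (P : probability T R) (X : nat -> T -> nat) : Prop :=
  forall (S : {fset nat}) (A : nat -> set nat),
    P (\bigcap_(k in [set` S]) (X k @^-1` A k)) =
    (\prod_(k <- S) P (X k @^-1` A k))%E.

(* eta_series X t = sum_{k>=1} (-1)^{k-1} / (S_1 S_2 ... S_k), S_j = X_1+...+X_j,
   written with 0-based indices (X 0 is eta_1). *)
Definition eta_series (T : Type) (R : realType) (X : nat -> T -> nat) (t : T) : R :=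
  limn (fun n : nat => (\sum_(0 <= k < n)
    ((-1) ^+ k / \prod_(j < k.+1) (\sum_(l < j.+1) (X l t)%:R)) : R)).

(* Main.v *)
Require Import Defs.
From HB Require Import structures.
From mathcomp Require Import all_boot all_order all_algebra.
From mathcomp Require Import finmap.
From mathcomp Require Import all_classical all_reals all_analysis.
From mathcomp Require Import zify ring lra.
Import Order.TTheory GRing.Theory Num.Theory numFieldNormedType.Exports.
Local Open Scope classical_set_scope.
Local Open Scope ring_scope.

Section Alt.
Variable R : realType.
Variable a : nat -> nat.
Hypothesis apos : forall k, (0 < a k)%N.

Definition Ss (j : nat) : nat := \sum_(l < j.+1) a l.
Definition Nn (k : nat) : nat := \prod_(j < k.+1) Ss j.
Definition tm (k : nat) : R := (-1) ^+ k / (Nn k)%:R.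
Definition Ps (n : nat) : R := \sum_(0 <= k < n) tm k.

Lemma SsS j : Ss j.+1 = (Ss j + a j.+1)%N.
Proof. by rewrite /Ss big_ord_recr. Qed.

Lemma Ss0 : Ss 0 = a 0.
Proof. by rewrite /Ss big_ord1. Qed.

Lemma Ss_gt j : (j < Ss j)%N.
Proof.
elim: j => [|j IH]; first by rewrite Ss0 apos.
rewrite SsS; have := apos j.+1; lia.
Qed.

Lemma Ss_lt j : (Ss j < Ss j.+1)%N.
Proof. rewrite SsS; have := apos j.+1; lia. Qed.

Lemma NnS k : Nn k.+1 = (Nn k * Ss k.+1)%N.
Proof. by rewrite /Nn big_ord_recr. Qed.

Lemma Nn_gt0 k : (0 < Nn k)%N.
Proof.
elim: k => [|k IH]; first by rewrite /Nn big_ord1; have := Ss_gt 0.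
by rewrite NnS muln_gt0 IH /=; have := Ss_gt k.+1; lia.
Qed.

Lemma Nn_ge k : (k < Nn k)%N.
Proof.
elim: k => [|k IH]; first exact: Nn_gt0.
rewrite NnS; have := Ss_gt k.+1; nia.
Qed.

Definition uu k : R := ((Nn k)%:R)^-1.

Lemma uu_ge0 k : 0 <= uu k.
Proof. by rewrite /uu invr_ge0 ler0n. Qed.

Lemma uu_decr k : uu k.+1 <= uu k.
Proof.
rewrite /uu lef_pV2 ?posrE ?ltr0n ?Nn_gt0 // ler_nat NnS.
by rewrite leq_pmulr //; have := Ss_gt k.+1; lia.
Qed.

Lemma uu_le k : uu k <= (k.+1%:R)^-1.
Proof.
by rewrite /uu lef_pV2 ?posrE ?ltr0n ?Nn_gt0 // ler_nat Nn_ge.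
Qed.

Lemma sgn_tm k : (-1) ^+ k * tm k = uu k.
Proof.
by rewrite /tm /uu mulrA -exprD addnn -mul2n exprM sqrrN !expr1n mul1r.
Qed.

Lemma alt_bound m l :
  0 <= (-1) ^+ m * \sum_(m <= i < m + l) tm i <= uu m.
Proof.
elim: l m => [|l IH] m.
  by rewrite addn0 big_geq // mulr0 lexx uu_ge0.
rewrite big_ltn ?addnS ?ltnS ?leq_addr // mulrDr sgn_tm.
have := IH m.+1.
have E : (-1) ^+ m * \sum_(m.+1 <= i < m.+1 + l) tm i =
   - ((-1) ^+ m.+1 * \sum_(m.+1 <= i < m.+1 + l) tm i).
  by rewrite exprS mulN1r mulNr opprK.
rewrite E => /andP[h1 h2]; have := uu_decr m; have := uu_ge0 m.+1.
move=> h3 h4; apply/andP; split; lra.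
Qed.
End Alt.
Section Alt2.
Variable R : realType.
Variable a : nat -> nat.
Hypothesis apos : forall k, (0 < a k)%N.

Lemma Ps_diff m n : (m <= n)%N -> `|Ps R a n - Ps R a m| <= uu R a m.
Proof.
move=> mn; rewrite /Ps (big_cat_nat (leq0n m) mn) /= addrAC subrr add0r.
have := alt_bound R a apos m (n - m); rewrite subnKC //.
by move=> /andP[h1 h2]; rewrite -[X in X <= _]mul1r -(normr_sign R m) -normrM ger0_norm.
Qed.

Lemma Ps_cvg : cvgn (Ps R a).
Proof.
apply/cauchy_cvgP; apply: cauchy_exP => e e0.
pose m := Num.truncn (e^-1).
exists (Ps R a m).
suff H : \forall n \near \oo, ball (Ps R a m) e (Ps R a n) by exact: H.
near=> n.
rewrite /ball /= distrC (le_lt_trans (@Ps_diff m n _)) //; first by near: n; exact: nbhs_infty_ge.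
apply: (le_lt_trans (uu_le R a apos _)).
rewrite invf_plt ?posrE ?ltr0n //; exact: truncnS_gt.
Unshelve. all: by end_near. Qed.

Lemma Ps_lim_bound m : `|limn (Ps R a) - Ps R a m| <= uu R a m.
Proof.
have h1 : limn (Ps R a) <= Ps R a m + uu R a m.
  apply: limr_le; first exact: Ps_cvg.
  apply: filterS (nbhs_infty_ge m) => n mn.
  by have := @Ps_diff m n mn; rewrite ler_norml => /andP[]; lra.
have h2 : Ps R a m - uu R a m <= limn (Ps R a).
  apply: limr_ge; first exact: Ps_cvg.
  apply: filterS (nbhs_infty_ge m) => n mn.
  by have := @Ps_diff m n mn; rewrite ler_norml => /andP[]; lra.
rewrite ler_norml; apply/andP; split; lra.
Qed.
End Alt2.
Fixpoint Ldec (n : nat) : seq (seq nat) :=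
  if n is n'.+1 then Ldec n' ++ [seq n :: s | s <- Ldec n'] else [:: [::]].

Lemma Ldec_sum (R : realType) n :
  \sum_(s <- Ldec n) ((\prod_(x <- s) x)%:R)^-1 = n.+1%:R :> R.
Proof.
elim: n => [|n IH] /=; first by rewrite big_seq1 big_nil invr1.
rewrite big_cat big_map IH.
under eq_bigr do rewrite big_cons natrM invfM.
rewrite -mulr_sumr IH mulVf ?pnatr_eq0 //.
by rewrite [in RHS]mulrS addrC.
Qed.

Definition gtrel := (fun x y : nat => (y < x)%N).

Lemma Ldec_sub n : {subset Ldec n <= Ldec n.+1}.
Proof. by move=> s h /=; rewrite mem_cat h. Qed.

Lemma Ldec_mem n s : sorted gtrel s -> all (fun x => (0 < x <= n)%N) s ->
  s \in Ldec n.
Proof.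
elim: n s => [|n IH] [|x s] //=.
- by move=> _ /andP[/andP[h1 h2]]; lia.
- by move=> _ _; apply: Ldec_sub; apply: IH.
move=> hs /andP[/andP[x0 xn] hall].
have hlt : all (fun y => (y < x)%N) s.
  by apply: (order_path_min (leT := gtrel)) => // y z w; rewrite /gtrel; lia.
have hs' : sorted gtrel s by apply: path_sorted hs.
have hle : all (fun y => (0 < y <= n)%N) s.
  apply/allP => y ys; move/allP: hall => /(_ y ys) /andP[-> _] /=.
  move/allP: hlt => /(_ y ys); lia.
rewrite mem_cat; have [->|xn'] := eqVneq x n.+1.
  by apply/orP; right; apply/mapP; exists s => //; apply: IH.
apply/orP; left; apply: IH => //=.
rewrite hle andbT; move/eqP: xn'; lia.
Qed.
Fixpoint cen (R : realType) (r : seq nat) : R :=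
  if r is x :: r' then cen R r' + (-1) ^+ (size r') / ((\prod_(y <- r) y)%:R)
  else 0.

Definition rad (R : realType) (r : seq nat) : R :=
  2 / ((\prod_(y <- r) y)%:R * ((head 0%N r)%:R + 1)).

Definition Bl (R : realType) (r : seq nat) : set R := ball (cen R r) (rad R r).

Section Pre.
Variable R : realType.
Variable a : nat -> nat.
Hypothesis apos : forall k, (0 < a k)%N.

Fixpoint pre (j : nat) : seq nat := if j is j'.+1 then Ss a j' :: pre j' else [::].

Lemma size_pre j : size (pre j) = j.
Proof. by elim: j => //= j ->. Qed.

Lemma prod_pre j : \prod_(y <- pre j.+1) y = Nn a j.
Proof.
elim: j => [|j IH]; first by rewrite /= big_seq1 /Nn big_ord1.
by rewrite (_ : pre j.+2 = Ss a j.+1 :: pre j.+1) // big_cons IH NnS mulnC.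
Qed.

Lemma cen_pre n : cen R (pre n) = Ps R a n.
Proof.
elim: n => [|n IH]; first by rewrite /Ps big_geq.
rewrite (_ : cen R (pre n.+1) = cen R (pre n) + (-1) ^+ n / (\prod_(y <- pre n.+1) y)%:R); last first.
  by rewrite /= size_pre.
rewrite IH prod_pre.
by rewrite /Ps big_nat_recr //.
Qed.

Lemma pre_all j : all (fun x => (0 < x < Ss a j)%N) (pre j).
Proof.
elim: j => [|j IH] //=.
have := Ss_gt a apos j; have := Ss_lt a apos j => h1 h2.
rewrite (_ : (0 < Ss a j < Ss a j.+1)%N = true) /=; last by apply/andP; split; lia.
apply/allP => y /(allP IH) /andP[y0 yl]; apply/andP; split => //; lia.
Qed.

Lemma pre_sorted j : sorted gtrel (pre j).
Proof.
elim: j => [|j IH] //=.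
case: j IH => [|j] //= IH.
rewrite IH andbT; rewrite /gtrel; exact: Ss_lt.
Qed.

Lemma cover k : Bl R (pre k.+2) (limn (Ps R a)).
Proof.
rewrite /Bl cen_pre -ball_normE /ball_ /= distrC.
apply: (le_lt_trans (Ps_lim_bound R a apos k.+2)).
rewrite /uu /rad prod_pre [head _ _]/= NnS.
set D := (Nn a k.+1)%:R : R.
have D0 : 0 < D by rewrite /D ltr0n Nn_gt0.
have hS : ((Ss a k.+1)%:R + 1 : R) <= (Ss a k.+2)%:R.
  by rewrite natr1 ler_nat; exact: Ss_lt.
rewrite natrM -/D.
have hp : 0 < D * ((Ss a k.+1)%:R + 1) by rewrite mulr_gt0 // ltr_wpDl.
apply: (le_lt_trans (y := (D * ((Ss a k.+1)%:R + 1))^-1)).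
  have hle : D * ((Ss a k.+1)%:R + 1) <= D * (Ss a k.+2)%:R.
    by apply: ler_wpM2l => //; exact: ltW.
  by rewrite lef_pV2 ?posrE ?(lt_le_trans hp hle).
rewrite -[X in X < _]mul1r ltr_pM2r ?invr_gt0 //; lra.
Qed.
End Pre.
Definition Cset (R : realType) (i0 m : nat) : set R :=
  \big[setU/set0]_(s <- Ldec m.-1) Bl R [:: (m + i0)%N, m & s].

Lemma bigsetU_mem (T : Type) (I : eqType) (L : seq I) (F : I -> set T) s x :
  s \in L -> F s x -> (\big[setU/set0]_(i <- L) F i) x.
Proof.
elim: L => // y L IH; rewrite inE big_cons => /orP[/eqP <- h|h1 h2].
  by left.
by right; apply: IH.
Qed.

Lemma cover_C (R : realType) (a : nat -> nat) (apos : forall k, (0 < a k)%N)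
  (i0 k : nat) : a k.+1 = i0 -> Cset R i0 (Ss a k) (limn (Ps R a)).
Proof.
move=> ak.
have := cover R a apos k.
rewrite (_ : pre a k.+2 = [:: Ss a k.+1, Ss a k & pre a k]) // SsS ak => h.
rewrite /Cset; apply: (@bigsetU_mem _ _ _ (fun s => Bl R [:: (Ss a k + i0)%N, Ss a k & s]) (pre a k)) => //.
apply: Ldec_mem; first exact: pre_sorted.
apply/allP => x /(allP (pre_all a apos k)) /andP[x0 xl].
by rewrite x0 /=; lia.
Qed.

Lemma bigsetU_measurable (R : realType) (L : seq (seq nat)) (F : seq nat -> set R) :
  (forall s, measurable (F s)) -> measurable (\big[setU/set0]_(s <- L) F s).
Proof.
move=> mF; elim: L => [|s L IH]; first by rewrite big_nil.
by rewrite big_cons; apply: measurableU.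
Qed.

Lemma measure_bigsetU_le (R : realType) (L : seq (seq nat)) (F : seq nat -> set R) :
  (forall s, measurable (F s)) ->
  (lebesgue_measure (\big[setU/set0]_(s <- L) F s) <=
   \sum_(s <- L) lebesgue_measure (F s))%E.
Proof.
move=> mF; elim: L => [|s L IH]; first by rewrite !big_nil measure0.
rewrite !big_cons.
apply: (le_trans (measureU2 lebesgue_measure (mF s) (@bigsetU_measurable R L F mF))).
exact: leeD.
Qed.

Lemma Bl_measurable (R : realType) r : measurable (Bl R r).
Proof. exact: measurable_realfun.measurable_ball. Qed.

Lemma Cset_measurable (R : realType) i0 m : measurable (Cset R i0 m).
Proof. apply: bigsetU_measurable => s; exact: Bl_measurable. Qed.

Lemma rad_ge0 (R : realType) r : 0 <= rad R r.
Proof. by rewrite /rad divr_ge0 // mulr_ge0 // addr_ge0. Qed.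

Lemma Bl_measure (R : realType) r :
  lebesgue_measure (Bl R r) = (rad R r *+ 2)%:E.
Proof. by rewrite /Bl lebesgue_measure_ball // rad_ge0. Qed.

Lemma Cset_le (R : realType) i0 m : (0 < m)%N ->
  (lebesgue_measure (Cset R i0 m) <= (4 / (m%:R * m.+1%:R))%:E)%E.
Proof.
move=> m0.
apply: (le_trans (@measure_bigsetU_le R _ _ (fun s => Bl_measurable R _))).
have radE s : rad R [:: (m + i0)%N, m & s] =
   (4 / ((m + i0)%:R * m%:R * (m + i0).+1%:R)) / 2 * ((\prod_(x <- s) x)%:R)^-1.
  rewrite /rad /= !big_cons !natrM natr1.
  have h1 : ((m + i0)%N%:R : R) != 0 by rewrite pnatr_eq0; lia.
  have h2 : (m%:R : R) != 0 by rewrite pnatr_eq0; lia.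
  have h3 : ((m + i0).+1%:R : R) != 0 by rewrite pnatr_eq0.
  have [h4|h4] := eqVneq ((\prod_(x <- s) x)%:R : R) 0.
    by rewrite h4 !(mulr0, mul0r, invr0).
  have p0 := ler0n R i0; have pm : 0 < (m%:R : R) by rewrite ltr0n.
  field; apply/and4P; split; [exact: h4| | exact: h2|]; apply: lt0r_neq0; lra.
rewrite (eq_bigr (fun s => ((rad R [:: (m + i0)%N, m & s]) *+ 2)%:E)); last first.
  by move=> s _; exact: Bl_measure.
rewrite sumEFin lee_fin.
set c := 4 / ((m + i0)%:R * m%:R * (m + i0).+1%:R) : R.
rewrite (eq_bigr (fun s => c * ((\prod_(x <- s) x)%:R)^-1)); last first.
  by move=> s _; rewrite radE mulr2n /c -mulrDl -splitr.
have -> : \sum_(s <- Ldec m.-1) c / (\prod_(x <- s) x)%:R =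
   c * \sum_(s <- Ldec m.-1) ((\prod_(x <- s) x)%:R)^-1 by rewrite mulr_sumr.
rewrite Ldec_sum prednK //.
have pm : 0 < (m%:R : R) by rewrite ltr0n.
rewrite (_ : c * m%:R = 4 * ((m + i0)%:R * (m + i0).+1%:R)^-1); last first.
  rewrite /c; field; have p0 := ler0n R i0.
  by apply/and3P; split; apply: lt0r_neq0; lra.
rewrite ler_pM2l //.
rewrite lef_pV2 ?posrE ?mulr_gt0 ?ltr0n //; try lia.
by rewrite -!natrM ler_nat leq_mul //; lia.
Qed.
Lemma Cset_le' (R : realType) i0 m :
  (lebesgue_measure (Cset R i0 m) <= (4 / (m%:R * m.+1%:R))%:E)%E.
Proof.
case: m => [|m]; last exact: Cset_le.
rewrite /Cset /= big_seq1 Bl_measure /rad !big_cons big_nil.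
by rewrite !(muln0, mul0n, mulr0, mul0r, invr0, mul0rn).
Qed.

Definition Aset (R : realType) (i0 : nat) : set R :=
  \bigcap_N \bigcup_(n in ~` `I_N) Cset R i0 n.

Lemma Aset_measurable (R : realType) i0 : measurable (Aset R i0).
Proof.
apply: bigcapT_measurable => N; apply: bigcup_measurable => n _.
exact: Cset_measurable.
Qed.

Lemma tele_sum (R : realType) N l : (0 < N)%N ->
  \sum_(N <= n < N + l) (4 / (n%:R * n.+1%:R) : R) = 4 / N%:R - 4 / (N + l)%:R.
Proof.
move=> N0; elim: l => [|l IH]; first by rewrite addn0 big_geq // subrr.
rewrite addnS big_nat_recr ?leq_addr //= IH.
have h1 : ((N + l)%:R : R) != 0 by rewrite pnatr_eq0; lia.
have h2 : ((N + l).+1%:R : R) != 0 by rewrite pnatr_eq0.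
have p0 := ler0n R l; have p1 : 0 < (N%:R : R) by rewrite ltr0n.
by field; apply/and3P; split; apply: lt0r_neq0; lra.
Qed.

Lemma tail_bound (R : realType) N : (0 < N)%N ->
  (\sum_(N <= n <oo) ((4 / (n%:R * n.+1%:R) : R))%:E <= (4 / N%:R)%:E)%E.
Proof.
move=> N0; apply: lime_le.
  apply: is_cvg_nneseries => n _ _; rewrite lee_fin divr_ge0 // mulr_ge0 //.
apply: nearW => K; rewrite sumEFin lee_fin.
have [KN|NK] := leqP K N.
  by rewrite big_geq // divr_ge0.
rewrite -(subnKC (ltnW NK)) tele_sum //.
by rewrite lerBlDr lerDl divr_ge0.
Qed.

Lemma Aset_null (R : realType) i0 : lebesgue_measure (Aset R i0) = 0%E.
Proof.
apply/eqP; rewrite eq_le measure_ge0 andbT; apply/lee_addgt0Pr => e e0.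
rewrite add0e.
pose N := (Num.truncn (4 / e)).+1.
have N0 : (0 < N)%N by [].
have hN : 4 / N%:R <= e.
  have := truncnS_gt (4 / e); rewrite -/N => h.
  rewrite ler_pdivrMr ?ltr0n // mulrC -ler_pdivrMr //; exact: ltW.
have H1 := @measure_sigma_subadditive_tail _ _ _ lebesgue_measure
   (Aset R i0) (fun n => Cset R i0 n) N (fun n => Cset_measurable R i0 n) (Aset_measurable R i0)
   (fun x hx => hx N I).
have H2 : (\sum_(N <= n <oo) lebesgue_measure (Cset R i0 n) <=
    \sum_(N <= n <oo) ((4 / (n%:R * n.+1%:R) : R))%:E)%E.
  apply: lee_nneseries => n; first by move=> _ _; exact: measure_ge0.
  move=> _; exact: Cset_le'.
apply: (le_trans H1); apply: (le_trans H2).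
apply: (le_trans (tail_bound R N N0)).
by rewrite lee_fin.
Qed.
Section Meas.
Context d (T : measurableType d).

Lemma mnat_const (c : nat) : measurable_fun [set: T] (fun _ : T => c).
Proof. exact: measurable_cst. Qed.

Lemma mnat2 (f g : T -> nat) (op : nat -> nat -> nat) :
  measurable_fun setT f -> measurable_fun setT g ->
  measurable_fun setT (fun t => op (f t) (g t)).
Proof.
move=> mf mg _ B _; rewrite setTI.
have -> : (fun t => op (f t) (g t)) @^-1` B = \bigcup_i \bigcup_j
    ((f @^-1` [set i]) `&` (g @^-1` [set j]) `&` [set _ | B (op i j)]).
  apply/seteqP; split => [t Bt|t [i _ [j _ [[/= fi gj] Bij]]]].
    by exists (f t) => //; exists (g t).
  by rewrite /= fi gj.
apply: bigcupT_measurable => i; apply: bigcupT_measurable => j.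
apply: measurableI; first apply: measurableI.
- by rewrite -[_ @^-1` _]setTI; apply: mf.
- by rewrite -[_ @^-1` _]setTI; apply: mg.
- have [h|h] := pselect (B (op i j)).
    by rewrite (_ : [set _ | _] = setT) //; apply/seteqP; split.
  by rewrite (_ : [set _ | _] = set0) //; apply/seteqP; split.
Qed.

Lemma mnat_sum n (F : nat -> T -> nat) : (forall i, measurable_fun setT (F i)) ->
  measurable_fun setT (fun t => \sum_(i < n) F i t).
Proof.
move=> mF; elim: n => [|n IH].
  by under eq_fun do rewrite big_ord0; exact: mnat_const.
under eq_fun do rewrite big_ord_recr /=.
exact: (@mnat2 (fun t => \sum_(i < n) F i t) (F n) addn IH (mF n)).
Qed.

Lemma mnat_prod n (F : nat -> T -> nat) : (forall i, measurable_fun setT (F i)) ->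
  measurable_fun setT (fun t => \prod_(i < n) F i t).
Proof.
move=> mF; elim: n => [|n IH].
  by under eq_fun do rewrite big_ord0; exact: mnat_const.
under eq_fun do rewrite big_ord_recr /=.
exact: (@mnat2 (fun t => \prod_(i < n) F i t) (F n) muln IH (mF n)).
Qed.

Lemma mnat_comp (R : realType) (f : T -> nat) (g : nat -> R) :
  measurable_fun setT f -> measurable_fun setT (fun t => g (f t)).
Proof.
move=> mf; apply: (measurableT_comp (f := g) (g := f)) => //.
Qed.

Lemma eta_seriesE (R : realType) (X : nat -> T -> nat) t :
  eta_series R X t = limn (Ps R (fun l => X l t)).
Proof.
rewrite /eta_series.
suff -> : (fun n : nat => \sum_(0 <= k < n)
   ((-1) ^+ k / \prod_(j < k.+1) (\sum_(l < j.+1) (X l t)%:R)) : R) =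
   Ps R (fun l => X l t) by [].
rewrite /Ps /tm /Nn /Ss; apply: funext => n.
apply: eq_bigr => k _; rewrite natr_prod; congr (_ / _).
by apply: eq_bigr => j _; rewrite natr_sum.
Qed.

Lemma eta_series_measurable (R : realType) (X : nat -> T -> nat) :
  (forall k, measurable_fun setT (X k)) -> (forall k t, (0 < X k t)%N) ->
  measurable_fun setT (eta_series R X).
Proof.
move=> mX Xpos.
apply: (measurable_realfun.measurable_fun_cvg (h := fun n t => Ps R (fun l => X l t) n)).
  move=> n; apply: measurable_sum => k.
  rewrite /tm; apply: (@mnat_comp R (fun t => Nn (fun l => X l t) k) (fun m : nat => (-1) ^+ k / m%:R)).
  apply: (@mnat_prod k.+1 (fun j t => Ss (fun l => X l t) j)) => j.
  exact: (@mnat_sum j.+1 (fun l t => X l t)).  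
move=> t _; rewrite eta_seriesE; apply: Ps_cvg => l; exact: Xpos.
Qed.
End Meas.
Lemma prod_bound (R : realType) (s : seq nat) (q : nat -> R) :
  (forall k, 0 <= q k <= 1) ->
  \prod_(k <- s) (1 - q k) <= (1 + \sum_(k <- s) q k)^-1.
Proof.
move=> hq; elim: s => [|x s IH]; first by rewrite !big_nil addr0 invr1.
rewrite !big_cons.
have S0 : 0 <= \sum_(k <- s) q k by apply: sumr_ge0 => k _; case/andP: (hq k).
have [q0 q1] := andP (hq x).
apply: (le_trans (y := (1 - q x) * (1 + \sum_(k <- s) q k)^-1)).
  by apply: ler_wpM2l => //; lra.
have h1 : 0 < 1 + \sum_(k <- s) q k by lra.
have h2 : 0 < 1 + (q x + \sum_(k <- s) q k) by lra.
set A := 1 + \sum_(k <- s) q k in h1 *.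
set B := 1 + (q x + \sum_(k <- s) q k) in h2 *.
have e1 : A^-1 * A = 1 by rewrite mulVf // gt_eqF.
have e2 : B^-1 * B = 1 by rewrite mulVf // gt_eqF.
have i1 : 0 < A^-1 by rewrite invr_gt0.
have i2 : 0 < B^-1 by rewrite invr_gt0.
have i12 : 0 <= A^-1 * B^-1 by rewrite mulr_ge0 // ltW.
have key : (1 - q x) * B <= A by rewrite /A /B; nra.
have : 0 <= A^-1 * B^-1 * (A - (1 - q x) * B) by apply: mulr_ge0 => //; lra.
nra.
Qed.

Section Prob.
Context d (T : measurableType d) (R : realType) (P : probability T R)
  (eta : nat -> T -> nat) (p : nat -> nat -> R).
Hypothesis eta_meas : forall k, measurable_fun setT (eta k).
Hypothesis eta_indep : mutually_independent_nat P eta.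
Hypothesis eta_law : forall i k, P [set t | eta k t = i] = (p i k)%:E.
Hypothesis p_ge0 : forall i k, 0 <= p i k.
Variable i0 : nat.
Hypothesis p_div : (\sum_(0 <= k <oo) (p i0 k)%:E)%E = +oo%E.

Lemma pre_meas k (B : set nat) : measurable (eta k @^-1` B).
Proof. by rewrite -[_ @^-1` _]setTI; apply: eta_meas. Qed.

Lemma p_le1 i k : p i k <= 1.
Proof.
rewrite -lee_fin -eta_law; apply: probability_le1.
exact: (pre_meas k [set i]).
Qed.

Lemma div_partial N M : exists L, M <= \sum_(k <- iota N L) p i0 k.
Proof.
have c : cvgn (fun K => \sum_(0 <= k < K) (p i0 k)%:E)%E.
  by apply: is_cvg_nneseries => n _ _; rewrite lee_fin.
have h : ((fun K => \sum_(0 <= k < K) (p i0 k)%:E)%E @ \oo --> +oo%E).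
  by rewrite -p_div; exact: c.
have := proj1 (cvgeyPge _) h (M + \sum_(0 <= k < N) p i0 k).
case=> K0 _ HK.
have := HK (maxn K0 N) (leq_maxl _ _); rewrite /= sumEFin lee_fin.
rewrite (big_cat_nat (leq0n N) (leq_maxr K0 N)) /= [X in _ <= X]addrC lerD2r => HM.
exists (maxn K0 N - N)%N.
exact: HM.
Qed.
Definition Zt (N : nat) : set T :=
  \bigcap_(k in ~` `I_N) (eta k @^-1` (~` [set i0])).

Lemma Zt_meas N : measurable (Zt N).
Proof. apply: bigcap_measurableType => k _; exact: pre_meas. Qed.

Lemma tailnull N : P (Zt N) = 0%E.
Proof.
apply/eqP; rewrite eq_le measure_ge0 andbT; apply/lee_addgt0Pr => e e0.
rewrite add0e.
have [L HL] := div_partial N (e^-1).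
pose S := seq_fset tt (iota N L).
have HS : Zt N `<=` \bigcap_(k in [set` S]) (eta k @^-1` (fun=> ~` [set i0]) k).
  move=> t Zt_t k; rewrite /= seq_fsetE mem_iota => /andP[h _]; apply: Zt_t.
  by rewrite /setC /=; apply/negP; rewrite -leqNgt.
have Sm : measurable (\bigcap_(k in [set` S]) (eta k @^-1` (fun=> ~` [set i0]) k)).
  apply: bigcap_measurableType => k _; exact: pre_meas.
apply: (le_trans (le_measure _ _ _ HS)); rewrite ?inE; [exact: Zt_meas|exact: Sm|].
change (P (\bigcap_(k in [set` S]) eta k @^-1` (fun=> ~` [set i0]) k) <= e%:E)%E.
rewrite eta_indep.
have term k : P (eta k @^-1` ~` [set i0]) = (1 - p i0 k)%:E.
  rewrite -preimage_setC probability_setC; last exact: pre_meas.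
  by rewrite (eta_law i0 k) EFinB.
under eq_bigr do rewrite term.
rewrite prodEFin lee_fin.
rewrite (perm_big _ (seq_fset_perm tt (iota N L))) /= undup_id ?iota_uniq //.
apply: (le_trans (@prod_bound R (iota N L) (p i0) _)).
  by move=> k; rewrite p_ge0 p_le1.
rewrite invf_ple ?posrE; last 2 first.
- by have := @sumr_ge0 R _ (iota N L) xpredT (p i0) (fun k _ => p_ge0 i0 k); lra.
- exact: e0.
have : 0 < e^-1 by rewrite invr_gt0.
lra.
Qed.

Definition Eset : set T := \bigcap_N \bigcup_(k in ~` `I_N) (eta k @^-1` [set i0]).

Lemma Eset_meas : measurable Eset.
Proof.
apply: bigcapT_measurable => N; apply: bigcup_measurable => k _; exact: pre_meas.
Qed.

Lemma Eset_prob : P Eset = 1%E.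
Proof.
have hC : P (~` Eset) = 0%E.
  apply/eqP; rewrite eq_le measure_ge0 andbT.
  have H := @measure_sigma_subadditive _ _ _ P (~` Eset) Zt Zt_meas
     (measurableC Eset_meas).
  have sub : ~` Eset `<=` \bigcup_n Zt n.
    move=> t nE; apply: contrapT => hnot; apply: nE => N _.
    apply: contrapT => hN; apply: hnot; exists N => //.
    by move=> k kN ek; apply: hN; exists k.
  apply: (le_trans (H sub)).
  by rewrite (eq_eseriesr (fun n _ => tailnull n)) eseries0.
move: hC; rewrite probability_setC; last exact: Eset_meas.
have fin : P Eset \is a fin_num by apply: fin_num_measure; exact: Eset_meas.
rewrite -(fineK fin) -EFinB => /eqP; rewrite eqe => /eqP h.
by apply/eqP; rewrite -(fineK fin) eqe; apply/eqP; lra.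
Qed.
End Prob.

Theorem theorem7 (d : measure_display) (T : measurableType d) (R : realType)
  (P : probability T R) (eta : nat -> T -> nat) (p : nat -> nat -> R)
  (eta_meas : forall k, measurable_fun setT (eta k))
  (eta_pos : forall k t, (0 < eta k t)%N)
  (eta_indep : mutually_independent_nat P eta)
  (eta_law : forall i k, P [set t | eta k t = i] = (p i k)%:E)
  (p_ge0 : forall i k, 0 <= p i k)
  (p_sum1 : forall k, (\sum_(1 <= i <oo) (p i k)%:E)%E = 1%E)
  (i0 : nat) (i0_pos : (0 < i0)%N)
  (p_div : (\sum_(0 <= k <oo) (p i0 k)%:E)%E = +oo%E) :
  exists A : set R,
    [/\ measurable A, (lebesgue_measure A = 0)%E,
        measurable (eta_series R eta @^-1` A)
      & P (eta_series R eta @^-1` A) = 1%E].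
Proof.
have mf := @eta_series_measurable d T R eta eta_meas eta_pos.
have mpre : measurable (eta_series R eta @^-1` Aset R i0).
  by have := mf measurableT _ (Aset_measurable R i0); rewrite setTI.
exists (Aset R i0); split => //.
- exact: Aset_measurable.
- exact: Aset_null.
have HE := @Eset_prob d T R P eta p eta_meas eta_indep eta_law p_ge0 i0 p_div.
have sub : Eset d T eta i0 `<=` eta_series R eta @^-1` Aset R i0.
  move=> t Et N _.
  have [k kN ek] := Et N.+1 I.
  case: k kN ek => [|j] kN ek; first by exfalso; apply: kN.
  exists (Ss (fun l => eta l t) j).
    have := Ss_gt (fun l => eta l t) (fun l => eta_pos l t) j.
    move: kN; rewrite /setC /= => kN h; apply/negP; rewrite -leqNgt.
    by move/negP: kN; rewrite -leqNgt; lia.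
  rewrite /= eta_seriesE.
  exact: (@cover_C R (fun l => eta l t) (fun l => eta_pos l t) i0 j ek).
apply/le_anti/andP; split; first exact: probability_le1.
rewrite -HE; apply: le_measure => //; rewrite inE //.
exact: Eset_meas.
Qed.
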